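(* Consider any AS graph (with its customer–provider and peer–peer labels), any destination AS $d$, any set $S\subseteq V$ of secure ASes (partial deployment allowed), and any fixed deterministic tie-break rules, and suppose all secure ASes use the same one of the three S*BGP routing models (security first, security second, or security third). Then the routing system has a unique stable routing state, and S*BGP route-selection dynamics are guaranteed to converge to this stable routing state. This holds in each of the three S*BGP routing models.
   Context: An AS graph is an undirected graph $G=(V,E)$ whose vertices are autonomous systems (ASes); every edge is labeled either customer–provider (one endpoint is the customer, the other its provider) or peer–peer. Routing to a fixed destination $d\in V$ is considered. The destination $d$ announces the route ''$d$'' to its neighbors. Every other AS $s$ selects at most one route to $d$ (a simple AS-level path from $s$ to $d$) among the routes announced to it by its neighbors, and announces the selected route (prepended with itself) according to the export policy (Ex): if the route's next hop is a customer of $s$, it is announced to all neighbors; otherwise only to $s$'s customers. A route at $s$ is a customer/peer/provider route if its next hop is a customer/peer/provider of $s$; its length is its number of hops. An insecure AS ranks available routes by: (LP) customer routes over peer routes over provider routes; then (SP) shorter over longer; then (TB) a fixed AS-specific deterministic tie-break. A set $S\subseteq V$ of ASes is secure; a route is secure iff every AS on it is in $S$ (such routes are learned via S*BGP), otherwise insecure. Each secure AS additionally applies the rule (SecP): prefer a secure route over an insecure route. In the security-first model SecP is applied before LP; in the security-second model between LP and SP; in the security-third model between SP and TB. Routing dynamics: ASes repeatedly (asynchronously) re-run their route selection on the routes currently announced to them and re-announce per Ex. A routing state (the route chosen by each AS $s\ne d$) is stable if no AS that re-runs its route selection changes its route. *)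

(* Defs.v *)
From mathcomp Require Import all_boot.
Set Implicit Arguments. Unset Strict Implicit. Unset Printing Implicit Defensive.

(* An AS graph on a finite vertex type V is given by two boolean relations:
   cust u v  <=>  u is a customer of v (i.e. v is a provider of u);
   peer u v  <=>  u and v are peers. *)

Section ASGraph.
Variable V : finType.
Variables (cust peer : rel V).

Definition wf_as_graph : Prop :=
  [/\ forall u, ~~ cust u u,
      forall u, ~~ peer u u,
      forall u v, peer u v = peer v u,
      forall u v, ~~ (cust u v && cust v u)
    & forall u v, ~~ (peer u v && (cust u v || cust v u))].

Definition no_cp_cycle : Prop :=
  forall (x : V) (p : seq V), path cust x p -> last x p = x -> p = [::].

Definition nbr (u v : V) : bool := [|| cust u v, cust v u | peer u v].

Definition is_route (d s : V) (r : seq V) : bool :=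
  match r with
  | [::] => false
  | x :: p => [&& x == s, path nbr x p, last x p == d & uniq r]
  end.

End ASGraph.

Inductive secmodel := SecFirst | SecSecond | SecThird.

Fixpoint lexlt (a b : seq nat) : bool :=
  match a, b with
  | x :: a', y :: b' => (x < y) || ((x == y) && lexlt a' b')
  | _, _ => false
  end.

Definition strict_total (T : eqType) (R : rel T) : Prop :=
  [/\ forall x, ~~ R x x,
      forall x y z, R x y -> R y z -> R x z
    & forall x y, x != y -> R x y || R y x].

Section Routing.
Variable V : finType.
Variables (cust peer : rel V) (d : V) (S : {set V}) (m : secmodel)
          (tb : V -> rel (seq V)).

(* A routing state: the route currently selected by each AS (None = no route).
   The value at d is irrelevant: d always "has" the route [:: d]. *)
Definition rstate := V -> option (seq V).

Definition cur (st : rstate) (n : V) : option (seq V) :=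
  if n == d then Some [:: d] else st n.

Definition exports (n : V) (r : seq V) (s : V) : bool :=
  [|| n == d,
      (match r with _ :: h :: _ => cust h n | _ => false end)
    | cust s n].

Definition offer (st : rstate) (s n : V) : option (seq V) :=
  if nbr cust peer s n then
    match cur st n with
    | Some r => if (s \notin r) && exports n r s then Some (s :: r) else None
    | None => None
    end
  else None.

Definition avail (st : rstate) (s : V) : seq (seq V) :=
  pmap (offer st s) (enum V).

(* LP class of a route at s: 0 customer, 1 peer, 2 provider route. *)
Definition lp_class (s : V) (r : seq V) : nat :=
  match r with
  | _ :: h :: _ => if cust h s then 0 else if peer s h then 1 else 2
  | _ => 3
  end.

Definition route_len (r : seq V) : nat := (size r).-1.

Definition insec (r : seq V) : nat := ~~ all (mem S) r.

(* Ranking keys (smaller is better), in order of application. *)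
Definition keys (s : V) (r : seq V) : seq nat :=
  if s \in S then
    match m with
    | SecFirst  => [:: insec r; lp_class s r; route_len r]
    | SecSecond => [:: lp_class s r; insec r; route_len r]
    | SecThird  => [:: lp_class s r; route_len r; insec r]
    end
  else [:: lp_class s r; route_len r].

Definition better (s : V) (r1 r2 : seq V) : bool :=
  lexlt (keys s r1) (keys s r2) || ((keys s r1 == keys s r2) && tb s r1 r2).

Definition select (st : rstate) (s : V) : option (seq V) :=
  let A := avail st s in
  ohead [seq r <- A | all (fun r' => (r' == r) || better s r r') A].

Definition valid_state (st : rstate) : Prop :=
  forall s, s != d -> oapp (is_route cust peer d s) true (st s).

Definition stable (st : rstate) : Prop :=
  forall s, s != d -> select st s = st s.

Definition activate (st : rstate) (a : V) : rstate :=
  fun x => if x == a then select st a else st x.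

Fixpoint run (st0 : rstate) (sched : nat -> V) (t : nat) : rstate :=
  match t with
  | 0 => st0
  | t'.+1 => activate (run st0 sched t') (sched t')
  end.

Definition fair (sched : nat -> V) : Prop :=
  forall (s : V) (t : nat), exists2 t', t <= t' & sched t' = s.

End Routing.

(* Main.v *)
Require Import Defs.
From mathcomp Require Import all_boot.
From mathcomp Require Import zify.
Set Implicit Arguments. Unset Strict Implicit. Unset Printing Implicit Defensive.

Lemma lexlt_irr a : lexlt a a = false.
Proof. by elim: a => //= x a IH; rewrite ltnn eqxx IH. Qed.

Lemma lexlt_asym a b : lexlt a b -> lexlt b a = false.
Proof.
elim: a b => [|x a IH] [|y b] //=.
by case: (ltngtP x y) => //= _; apply: IH.
Qed.

Section Proof.
Variable V : finType.
Variables (cust peer : rel V) (d : V) (S : {set V}) (m : secmodel)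
          (tb : V -> rel (seq V)).
Hypothesis wf : wf_as_graph cust peer.
Hypothesis tbT : forall s, strict_total (tb s).

Local Notation valid := (valid_state cust peer d).
Local Notation sel := (select cust peer d S m tb).
Local Notation av := (avail cust peer d).
Local Notation off := (offer cust peer d).
Local Notation route := (is_route cust peer d).
Local Notation bet := (better cust peer S m tb).
Local Notation curr := (cur d).

Lemma bet_asym s r1 r2 : bet s r1 r2 -> bet s r2 r1 = false.
Proof.
rewrite /better; case/orP => [lt | /andP [/eqP e t]].
  rewrite (lexlt_asym lt) /=; apply/negbTE/negP => /andP [/eqP e _].
  by move: lt; rewrite e lexlt_irr.
rewrite e lexlt_irr eqxx /=.
case: (tbT s) => irr tr _.
by apply/negbTE/negP => t'; move: (irr r1); rewrite (tr _ _ _ t t').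
Qed.

Lemma sel_someP st s r : sel st s = Some r ->
  r \in av st s /\ forall r', r' \in av st s -> r' = r \/ bet s r r'.
Proof.
rewrite /select.
set l := [seq _ <- _ | _].
have : forall x, ohead l = Some x -> x \in l by case: l => //= y l' x [->]; rewrite inE eqxx.
move=> H /H; rewrite mem_filter => /andP [/allP al inr]; split => // r' /al.
by case/orP => [/eqP ->|]; [left | right].
Qed.

Lemma sel_best st s r : r \in av st s ->
  (forall r', r' \in av st s -> r' = r \/ bet s r r') -> sel st s = Some r.
Proof.
move=> inr best.
have inl : r \in [seq x <- av st s | all (fun r' => (r' == x) || bet s x r') (av st s)].
  rewrite mem_filter inr andbT; apply/allP => r' /best [->|->]; by rewrite ?eqxx ?orbT.
rewrite /select.
case E: [seq _ <- _ | _] inl => [|x l] //= _.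
have : x \in [seq x <- av st s | all (fun r' => (r' == x) || bet s x r') (av st s)].
  by rewrite E inE eqxx.
rewrite mem_filter => /andP [/allP al inx].
have := al _ inr; case/orP => [/eqP -> //|bxr].
case: (best _ inx) => [-> //|brx].
by move: (bet_asym bxr); rewrite brx.
Qed.

Lemma avP st s r : r \in av st s -> exists n, off st s n = Some r.
Proof. by rewrite /avail mem_pmap => /mapP [n _ ->]; exists n. Qed.

Lemma av_in st s n r : off st s n = Some r -> r \in av st s.
Proof. by move=> e; rewrite /avail mem_pmap -e map_f // mem_enum. Qed.

Lemma offer_shape st s n r : off st s n = Some r ->
  [/\ nbr cust peer s n, r = s :: behead r &
      exists r0, [/\ curr st n = Some r0, s \notin r0, exports cust d n r0 s & r = s :: r0]].
Proof.
rewrite /offer; case: ifP => // nb; case: (curr st n) => // r0.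
case: ifP => // /andP [ns ex] [<-]; split => //; by exists r0.
Qed.

Lemma offer_cur st st' s n : curr st n = curr st' n -> off st s n = off st' s n.
Proof. by rewrite /offer => ->. Qed.

Lemma cons_route x n r0 : route x r0 -> nbr cust peer n x -> n \notin r0 -> route n (n :: r0).
Proof.
case: r0 => [|y p] //= /and4P [/eqP -> pa la u] nb ni.
by rewrite eqxx nb pa la /= ni u.
Qed.

Lemma cur_route st n r : valid st -> curr st n = Some r -> route n r.
Proof.
rewrite /cur; case: eqP => [-> _ [<-]|/eqP nd v e]; first by rewrite /= !eqxx.
by move: (v n nd); rewrite e.
Qed.

Lemma offer_route st s n r : valid st -> off st s n = Some r -> route s r.
Proof.
move=> v /offer_shape [nb _ [r0 [c ni _ ->]]].
exact: cons_route (cur_route v c) nb ni.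
Qed.

Lemma av_route st s r : valid st -> r \in av st s -> route s r.
Proof. by move=> v /avP [n /(offer_route v)]. Qed.

Lemma sel_route st s r : valid st -> sel st s = Some r -> route s r.
Proof. by move=> v /sel_someP [/(av_route v)]. Qed.


Definition B := #|V|.+4.
Definition enc a b c := (a * B + b) * B + c.
Definition phi s r :=
  let c := lp_class cust peer s r in let i := insec S r in let l := route_len r in
  match m with SecFirst => enc i c l | SecSecond => enc c i l | SecThird => enc c l i end.

Lemma lt_dig X Y c : X < Y -> c < B -> X * B + c < Y * B.
Proof. move=> XY cB; have := leq_mul (XY : X.+1 <= Y) (leqnn B); rewrite mulSn; lia. Qed.

Lemma dig X X' c c' : c < B -> c' < B -> X * B + c < X' * B + c' ->
  X < X' \/ (X = X' /\ c < c').
Proof.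
move=> hc hc' h; case: (ltngtP X X') => [lt|gt|e]; first by left.
  by have := lt_dig gt hc'; lia.
by right; subst; split => //; lia.
Qed.

Lemma dig_eq X X' c c' : c < B -> c' < B -> X * B + c = X' * B + c' -> X = X' /\ c = c'.
Proof.
move=> hc hc' h; case: (ltngtP X X') => [lt|gt|e].
- by have := lt_dig lt hc; lia.
- by have := lt_dig gt hc'; lia.
- by subst; split => //; lia.
Qed.

Lemma enc_lex a b c a' b' c' : b < B -> c < B -> b' < B -> c' < B ->
  enc a b c < enc a' b' c' -> lexlt [:: a; b; c] [:: a'; b'; c'].
Proof.
move=> hb hc hb' hc'; rewrite /enc => /(dig hc hc') [|[e lt]].
  move=> /(dig hb hb') [lt|[-> lt]] /=; first by rewrite lt.
  by rewrite ltnn eqxx lt orbT.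
have [-> ->] := dig_eq hb hb' e.
by rewrite /= !ltnn !eqxx lt ?orbT.
Qed.

Lemma enc_mono a b c a' b' c' : a <= a' -> b <= b' -> c < c' -> enc a b c < enc a' b' c'.
Proof.
move=> ha hb hc; rewrite /enc.
have h1 : a * B + b <= a' * B + b' by apply: leq_add => //; apply: leq_mul.
have := leq_mul h1 (leqnn B); lia.
Qed.

Lemma enc_mono2 a b c a' b' c' : a <= a' -> b < b' -> c < B -> enc a b c < enc a' b' c'.
Proof.
move=> ha hb hc; rewrite /enc.
have h1 : a * B + b < a' * B + b'.
  by have := leq_mul ha (leqnn B); lia.
have := lt_dig h1 hc; lia.
Qed.

Lemma route_size s r : route s r -> size r <= #|V|.
Proof.
case: r => [|x p] //= /and4P [_ _ _ u].
by have := max_card (mem (x :: p)); rewrite (card_uniqP (u : uniq (x :: p))).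
Qed.

Lemma len_lt s r : route s r -> route_len r < B.
Proof. move=> /route_size; rewrite /route_len /B; lia. Qed.

Lemma cls_lt s r : lp_class cust peer s r < B.
Proof.
have : lp_class cust peer s r <= 3.
  by rewrite /lp_class; case: r => [|x [|h p]] //; repeat case: ifP => _ //.
rewrite /B; lia.
Qed.

Lemma ins_lt r : insec S r < B.
Proof. by rewrite /insec /B; case: (~~ _). Qed.

Lemma phi_lt s r : route s r -> phi s r < B * B * B.
Proof.
move=> h.
have gen a b c : a < B -> b < B -> c < B -> enc a b c < B * B * B.
  by move=> ha hb hc; rewrite /enc; apply: lt_dig => //; apply: lt_dig.
rewrite /phi; case: m; apply: gen; by rewrite ?(len_lt h) ?cls_lt ?ins_lt.
Qed.

Lemma insec_cons z l : insec S l <= insec S (z :: l).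
Proof.
rewrite /insec /=; case: (all (mem S) l); rewrite ?andbT ?andbF //.
Qed.

Lemma phi_better s r1 r2 : route s r1 -> route s r2 -> phi s r1 < phi s r2 -> bet s r1 r2.
Proof.
move=> h1 h2 lt; rewrite /better; apply/orP; left.
have hi r : route s r -> s \notin S -> insec S r = 1.
  by case: r => [|x p] //= /and4P [/eqP -> _ _ _] ns; rewrite /insec /= (negbTE ns).
have L1 := len_lt h1; have L2 := len_lt h2.
have C1 := cls_lt s r1; have C2 := cls_lt s r2.
have I1 := ins_lt r1; have I2 := ins_lt r2.
rewrite /keys; case: ifP => sS; move: lt; rewrite /phi; case: m => lt.
- exact: enc_lex lt.
- exact: enc_lex lt.
- exact: enc_lex lt.
- move: lt; rewrite (hi _ h1 (negbT sS)) (hi _ h2 (negbT sS)).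
  by move/enc_lex => /(_ C1 L1 C2 L2) /=; rewrite ?ltnn ?eqxx.
- move: lt; rewrite (hi _ h1 (negbT sS)) (hi _ h2 (negbT sS)).
  by move/enc_lex => /(_ isT L1 isT L2) /=; rewrite ?ltnn ?eqxx /= ?andbF ?orbF.
- move: lt; rewrite (hi _ h1 (negbT sS)) (hi _ h2 (negbT sS)).
  by move/enc_lex => /(_ L1 isT L2 isT) /=; rewrite ?ltnn ?eqxx /= ?andbF ?orbF.
Qed.

Lemma phi_ext n y r : n != d -> route n r -> nbr cust peer y n ->
  exports cust d n r y -> phi n r < phi y (y :: r).
Proof.
move=> nd; case: r => [|x p] //= /and4P [/eqP ex pa la u] nb; subst x.
case: p pa la u => [|h p] /= pa la u; first by rewrite la in nd.
rewrite /exports (negbTE nd) /= => ex.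
case: wf => _ _ psym ncc npc.
have hc : lp_class cust peer n [:: n, h & p] <= lp_class cust peer y [:: y, n, h & p].
  rewrite /=; case cny: (cust n y).
    case/orP: ex => [-> //|cyn]; by move: (ncc n y); rewrite cny cyn.
  case pyn: (peer y n).
    case/orP: ex => [-> //|cyn]; by move: (npc y n); rewrite pyn cyn.
  by repeat case: ifP.
have hi := insec_cons y [:: n, h & p].
have hl : route_len [:: n, h & p] < route_len [:: y, n, h & p] by [].
have hb : insec S [:: n, h & p] < B := ins_lt _.
rewrite /phi; case: m; [exact: enc_mono | exact: enc_mono | exact: enc_mono2].
Qed.


Definition emptyst : rstate V := fun _ => None.

Fixpoint F k : rstate V :=
  if k is k'.+1 then
    fun y => if F k' y is Some r then Some r else
      if sel (F k') y is Some r then (if phi y r == k' then Some r else None) else None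
  else emptyst.

Definition cl k y (o : option (seq V)) :=
  (forall r, F k y = Some r -> o = Some r) /\
  (F k y = None -> forall r, o = Some r -> k <= phi y r).

Definition Inv k (st : rstate V) := forall y, y != d -> cl k y (st y).

Lemma F_some k y r : F k y = Some r -> F k.+1 y = Some r.
Proof. by move=> /= ->. Qed.

Lemma F_new k y r : F k y = None -> F k.+1 y = Some r -> sel (F k) y = Some r /\ phi y r = k.
Proof. move=> /= ->; case: (sel (F k) y) => // r'; case: eqP => // e [<-]; by []. Qed.

Lemma F_none k y : F k.+1 y = None -> F k y = None.
Proof. by rewrite /=; case: (F k y). Qed.

Lemma Inv_mono k st : Inv k.+1 st -> Inv k st.
Proof.
move=> I y yd; case: (I y yd) => h1 h2; split.
  by move=> r /F_some /h1.
move=> Fn r e; case E: (F k.+1 y) => [r'|].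
  by move: e; rewrite (h1 _ E) => -[<-]; have [_ ->] := F_new Fn E.
exact: ltnW (h2 E r e).
Qed.

Lemma Inv_F k : Inv k (F k).
Proof. by move=> y yd; split => // E r; rewrite E. Qed.

Lemma valid_F k : valid (F k).
Proof.
elim: k => [|k IH] s sd //=.
case E: (F k s) => [r|]; first by move: (IH s sd); rewrite E.
case E2: (sel (F k) s) => [r|] //; case: eqP => // _ /=; exact: sel_route IH E2.
Qed.

Lemma cur_fix k st n r0 : Inv k st -> curr (F k) n = Some r0 -> curr st n = Some r0.
Proof. by move=> I; rewrite /cur; case: eqP => // /eqP nd E; exact: (I n nd).1 _ E. Qed.

Lemma av_sub k st y r : Inv k st -> r \in av (F k) y -> r \in av st y.
Proof.
move=> I /avP [n e]; apply: (@av_in _ _ n); rewrite -e; apply: offer_cur.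
case E: (curr (F k) n) => [r0|]; first by rewrite (cur_fix I E).
by move: e; rewrite /offer E; case: ifP.
Qed.

Lemma classify k st y r : valid st -> Inv k st -> r \in av st y ->
  r \in av (F k) y \/ k < phi y r.
Proof.
move=> v I /avP [n e].
case E: (curr (F k) n) => [r0|].
  left; apply: (@av_in _ _ n); rewrite -e; apply: offer_cur; by rewrite (cur_fix I E).
right.
have nd : n != d by apply/eqP => nd; move: E; rewrite /cur nd eqxx.
have FN : F k n = None by move: E; rewrite /cur (negbTE nd).
have [nb _ [r1 [c ni ex ->]]] := offer_shape e.
move: c; rewrite /cur (negbTE nd) => c.
have rt : route n r1 by move: (v n nd); rewrite c.
have := (I n nd).2 FN r1 c; have := phi_ext nd rt nb ex; lia.
Qed.

Definition H1 k := forall st, valid st -> Inv k st ->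
  forall y r, y != d -> F k y = Some r -> sel st y = Some r.
Definition H2 k := forall y r, y != d -> F k y = None -> sel (F k) y = Some r -> k <= phi y r.

Lemma step k : H1 k -> H2 k -> forall st, valid st -> Inv k st ->
  forall y, y != d -> cl k.+1 y (sel st y).
Proof.
move=> h1 h2 st v I y yd; split.
- move=> r; case E: (F k y) => [r'|].
    by rewrite /= E => -[<-]; exact: h1 v I _ _ yd E.
  move=> E'; have [s1 ph] := F_new E E'.
  have [inr best] := sel_someP s1.
  apply: sel_best; first exact: av_sub I inr.
  move=> r' inr'; case: (classify v I inr') => [/best //|lt].
  right; apply: phi_better; [exact: av_route (valid_F k) inr | exact: av_route v inr' |].
  by rewrite ph.
- move=> E r s1; have E0 := F_none E.
  have [inr best] := sel_someP s1.
  case: (classify v I inr) => // inF.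
  have s2 : sel (F k) y = Some r.
    by apply: sel_best inF _ => r' /(av_sub I) /best.
  have := h2 y r yd E0 s2; move: E; rewrite /= E0 s2; case: eqP => // ne _ le; lia.
Qed.

Lemma H_all k : H1 k /\ H2 k.
Proof.
elim: k => [|k [h1 h2]].
  by split => //; move=> *; exact: leq0n.
split.
  move=> st v I y r yd E; exact: (step h1 h2 v (Inv_mono I) yd).1 _ E.
move=> y r yd E s1.
exact: (step h1 h2 (valid_F k.+1) (Inv_mono (Inv_F k.+1)) yd).2 E r s1.
Qed.

Definition K := B * B * B.

Lemma Inv_K st : valid st -> Inv K st -> forall y, y != d -> st y = F K y.
Proof.
move=> v I y yd; case: (I y yd) => h1 h2; case E: (F K y) => [r|]; first exact: h1.
case e: (st y) => [r|] //.
have rt : route y r by move: (v y yd); rewrite e.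
have := h2 E r e; have := phi_lt rt; rewrite /K; lia.
Qed.

Lemma stable_valid st : stable cust peer d S m tb st -> valid st.
Proof.
move=> stb.
suff H : forall k n r, size r <= k -> n != d -> st n = Some r -> route n r.
  move=> n nd; case e: (st n) => [r|] //=; exact: H (size r) n r (leqnn _) nd e.
elim=> [|k IH] n r sz nd e;
  move: (stb n nd); rewrite e => s1;
  have [inr _] := sel_someP s1; have [x ex] := avP inr;
  have [nb _ [r0 [c ni _ er]]] := offer_shape ex; rewrite er in sz *; first by [].
apply: cons_route nb ni.
move: c; rewrite /cur; case: eqP => [-> [<-]|/eqP xd c]; first by rewrite /= !eqxx.
exact: IH c.
Qed.

Local Notation runs := (run cust peer d S m tb).

Lemma valid_run st0 sched t : valid st0 -> valid (runs st0 sched t).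
Proof.
move=> v; elim: t => //= t IH s sd; rewrite /activate.
case: (s =P sched t) => [<-|_]; last exact: IH s sd.
case E: (sel _ s) => [r|] //=; exact: sel_route IH E.
Qed.

Lemma persist k st0 sched T : (forall t, T <= t -> Inv k (runs st0 sched t)) -> valid st0 ->
  forall y, y != d -> forall t0, T <= t0 -> sched t0 = y ->
  forall t, t0 < t -> cl k.+1 y (runs st0 sched t y).
Proof.
move=> hI v y yd t0 Tt0 st0y; elim=> [|t IH] // lt.
rewrite /= /activate; case: (y =P sched t) => [e|ne].
  rewrite -e; have [h1 h2] := H_all k.
  apply: (step h1 h2 (valid_run _ _ v) (hI t _) yd); lia.
apply: IH; move: lt; rewrite ltnS leq_eqVlt => /orP [/eqP et|//].
by subst; case: ne.
Qed.

Lemma conv_level k st0 sched : valid st0 -> fair sched ->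
  exists T, forall t, T <= t -> Inv k (runs st0 sched t).
Proof.
move=> v fr; elim: k => [|k [T hT]].
  by exists 0 => t _ y yd; split => // _ r _; exact: leq0n.
have gen : forall l : seq V, exists T', forall y, y \in l -> y != d ->
    forall t, T' <= t -> cl k.+1 y (runs st0 sched t y).
  elim=> [|y l [T1 h1]]; first by exists 0.
  have [t0 Tt0 e] := fr y T.
  exists (maxn T1 t0.+1) => z; rewrite inE => /orP [/eqP -> | zl] zd t le.
    by apply: (persist hT v zd Tt0 e); lia.
  by apply: (h1 z zl zd); lia.
have [T' h] := gen (enum V).
by exists T' => t le y yd; exact: h y (mem_enum _ _) yd t le.
Qed.

Lemma main_thm : exists st : rstate V,
  [/\ valid st, stable cust peer d S m tb st,
      (forall st' : rstate V, stable cust peer d S m tb st' ->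
          forall s, s != d -> st' s = st s)
    & (forall (st0 : rstate V) (sched : nat -> V),
          valid st0 -> fair sched ->
          exists T, forall t, T <= t -> forall s, s != d ->
            runs st0 sched t s = st s)].
Proof.
exists (F K); split.
- exact: valid_F.
- move=> s sd; have [h1 h2] := H_all K; case E: (F K s) => [r|].
    exact: h1 (valid_F K) (Inv_F K) s r sd E.
  case e: (sel (F K) s) => [r|] //.
  have := h2 s r sd E e; have := phi_lt (sel_route (valid_F K) e); rewrite /K; lia.
- move=> st' stb s sd; have v := stable_valid stb.
  have IK : forall k, Inv k st'.
    elim=> [|k IH]; first by move=> y yd; split => // _ r _; exact: leq0n.
    move=> y yd; rewrite -(stb y yd); have [h1 h2] := H_all k.
    exact: (step h1 h2 v IH yd).
  exact: (Inv_K v (IK K)) s sd.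
- move=> st0 sched v fr; have [T hT] := conv_level K v fr.
  by exists T => t le s sd; exact: Inv_K (valid_run _ _ v) (hT t le) s sd.
Qed.

End Proof.

Theorem theorem1 :
  forall (V : finType) (cust peer : rel V) (d : V) (S : {set V})
         (m : secmodel) (tb : V -> rel (seq V)),
    wf_as_graph cust peer ->
    no_cp_cycle cust ->
    (forall s, strict_total (tb s)) ->
    exists st : rstate V,
      [/\ valid_state cust peer d st,
          stable cust peer d S m tb st,
          (forall st' : rstate V, stable cust peer d S m tb st' ->
              forall s, s != d -> st' s = st s)
        & (forall (st0 : rstate V) (sched : nat -> V),
              valid_state cust peer d st0 -> fair sched ->
              exists T, forall t, T <= t -> forall s, s != d ->
                run cust peer d S m tb st0 sched t s = st s)].
Proof.
move=> V cust peer d S m tb wf _ tbT.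
exact: main_thm.
Qed.
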